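(* Let $k\ge s\ge1$, let $\tau_1,\dots,\tau_k\in[0,1]$ be distinct, let $\ell_j$ be the Lagrange polynomials of degree $k-1$ on these nodes, and consider the $k$-stage collocation Runge--Kutta method with Butcher matrix $\mathcal A=(\alpha_{ij})$, $\alpha_{ij}=\int_0^{\tau_i}\ell_j(\tau)\,\mathrm{d}\tau$, and weights $\omega_j=\int_0^1\ell_j(\tau)\,\mathrm{d}\tau$. Let $\Omega=\mathrm{diag}(\omega_1,\dots,\omega_k)$ and $\mathcal P_s\in\mathbb R^{k\times s}$ with $(\mathcal P_s)_{ij}=P_j(\tau_i)$. Provided that the quadrature formula $(\omega_i,\tau_i)_{i=1}^k$ is exact for polynomials of degree at least $2s-1$, the Runge--Kutta method with abscissae $\tau_1,\dots,\tau_k$, weights $\omega_1,\dots,\omega_k$ and Butcher matrix $A=\mathcal A\mathcal P_s\mathcal P_s^T\Omega$ is the method HBVM$(k,s)$ based at the abscissae $\{\tau_i\}$, i.e. $\mathcal A\mathcal P_s\mathcal P_s^T\Omega=\mathcal I_s\mathcal P_s^T\Omega$.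
   Context: $P_j(t)=\sqrt{2j-1}\,\hat P_{j-1}(t)$, with $\hat P_{j-1}$ the shifted Legendre polynomial of degree $j-1$ on $[0,1]$, so that $\{P_j\}$ is orthonormal on $[0,1]$. HBVM$(k,s)$ based at the abscissae $\{\tau_i\}$ is the Runge--Kutta method with abscissae $\tau_i$, weights $\omega_i$ and Butcher matrix $\mathcal I_s\mathcal P_s^T\Omega$, where $\mathcal I_s\in\mathbb R^{k\times s}$ has entries $(\mathcal I_s)_{ij}=\int_0^{\tau_i}P_j(x)\,\mathrm{d}x$. *)

(* Defs.v *)
From HB Require Import structures.
From mathcomp Require Import all_boot all_order all_algebra.
Set Implicit Arguments. Unset Strict Implicit. Unset Printing Implicit Defensive.
Import Order.TTheory GRing.Theory Num.Theory.
Local Open Scope ring_scope.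

Section Defs.
Variable R : rcfType.

Definition polyint (p : {poly R}) : {poly R} :=
  \poly_(i < (size p).+1) (if i is i'.+1 then p`_i' / (i'.+1)%:R else 0).

Definition pint (p : {poly R}) (a b : R) : R := (polyint p).[b] - (polyint p).[a].

(* Shifted Legendre polynomial of degree n on [0,1] (Rodrigues' formula):
   hatP n = 1/n! d^n/dx^n (x^2 - x)^n. *)
Definition shiftLeg (n : nat) : {poly R} := (('X ^+ 2 - 'X) ^+ n)^`N(n).

(* Orthonormal basis P_j = sqrt(2j-1) hatP_{j-1}, j >= 1. *)
Definition Pj (j : nat) : {poly R} := Num.sqrt ((2 * j - 1)%N%:R) *: shiftLeg j.-1.

Definition lagrange k (tau : 'I_k -> R) (j : 'I_k) : {poly R} :=
  \prod_(m < k | m != j) (('X - (tau m)%:P) * ((tau j - tau m)^-1)%:P).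

Definition colloc_A k (tau : 'I_k -> R) : 'M[R]_k :=
  \matrix_(i, j) pint (lagrange tau j) 0 (tau i).

Definition colloc_w k (tau : 'I_k -> R) (j : 'I_k) : R := pint (lagrange tau j) 0 1.

Definition Omega k (tau : 'I_k -> R) : 'M[R]_k := diag_mx (\row_j colloc_w tau j).

(* (P_s)_{ij} = P_j(tau_i), j = 1..s (0-based index j means P_{j+1}). *)
Definition Pmat k s (tau : 'I_k -> R) : 'M[R]_(k, s) :=
  \matrix_(i, j) (Pj j.+1).[tau i].

Definition Imat k s (tau : 'I_k -> R) : 'M[R]_(k, s) :=
  \matrix_(i, j) pint (Pj j.+1) 0 (tau i).

Definition quad_exact k (tau : 'I_k -> R) (d : nat) : Prop :=
  forall p : {poly R}, (size p <= d.+1)%N ->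
    \sum_(i < k) colloc_w tau i * p.[tau i] = pint p 0 1.

End Defs.

(* Main.v *)
Require Import Defs.
From HB Require Import structures.
From mathcomp Require Import all_boot all_order all_algebra.
From mathcomp Require Import zify.
Import Order.TTheory GRing.Theory Num.Theory.
Local Open Scope ring_scope.

Section H.
Variable R : rcfType.

Lemma coef_polyint (p : {poly R}) i :
  (polyint p)`_i = if i is i'.+1 then p`_i' / (i'.+1)%:R else 0.
Proof.
rewrite /polyint coef_poly; case: i => [|i] /=; first by [].
case: ltnP => // H; rewrite nth_default ?mul0r //.
Qed.

Lemma polyint_sum k (c : 'I_k -> R) (q : 'I_k -> {poly R}) :
  polyint (\sum_j c j *: q j) = \sum_j c j *: polyint (q j).
Proof.
apply/polyP => i; rewrite coef_polyint !coef_sum; case: i => [|i].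
  by apply/esym/big1 => j _; rewrite coefZ coef_polyint mulr0.
rewrite coef_sum mulr_suml; apply: eq_bigr => j _.
by rewrite !coefZ coef_polyint mulrA.
Qed.

Lemma pint_sum k (c : 'I_k -> R) (q : 'I_k -> {poly R}) a b :
  pint (\sum_j c j *: q j) a b = \sum_j c j * pint (q j) a b.
Proof.
rewrite /pint polyint_sum !horner_sum -sumrB; apply: eq_bigr => j _.
by rewrite !hornerZ mulrBr.
Qed.

Lemma size_Pj j : (size (Pj R j.+1) <= j.+1)%N.
Proof.
rewrite /Pj /shiftLeg /=; apply: leq_trans (size_scale_leq _ _) _.
rewrite /nderivn; apply: leq_trans (size_poly _ _) _.
rewrite leq_subLR.
apply: leq_trans (size_poly_exp_leq _ _) _.
have : (size (('X^2 - 'X)%R : {poly R}) <= 3)%N.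
  apply: leq_trans (size_polyD _ _) _.
  by rewrite size_polyXn size_polyN size_polyX.
case: (size _) => [|[|[|[|n]]]] //= _; lia.
Qed.

Variable k : nat.
Variable tau : 'I_k -> R.
Hypothesis tinj : injective tau.

Lemma lagrange_at j i : (Defs.lagrange tau j).[tau i] = (i == j)%:R.
Proof.
rewrite /lagrange horner_prod; have [->|nij] := eqVneq i j.
  rewrite big1 // => m mj; rewrite hornerM !hornerE divff // subr_eq0.
  by apply/eqP => /tinj /eqP; rewrite eq_sym (negbTE mj).
rewrite (bigD1 i) //= hornerM !hornerE subrr !mul0r //.
Qed.

Lemma size_lagrange j : (size (Defs.lagrange tau j) <= k)%N.
Proof.
have dn m : m != j -> (tau j - tau m)^-1 != 0.
  by move=> mj; rewrite invr_eq0 subr_eq0; apply/eqP => /tinj /eqP; rewrite eq_sym (negbTE mj).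
have xn m : ('X - (tau m)%:P : {poly R}) != 0 by rewrite -size_poly_eq0 size_XsubC.
rewrite /lagrange size_prod.
  rewrite (eq_bigr (fun _ => 2%N)).
    rewrite sum_nat_const cardC1 card_ord; have := ltn_ord j; lia.
  move=> m mj; rewrite size_mul ?size_XsubC ?size_polyC ?polyC_eq0 ?dn //.
move=> m mj; rewrite mulf_eq0 negb_or xn polyC_eq0 dn //.
Qed.

Lemma interp (p : {poly R}) : (size p <= k)%N ->
  p = \sum_j p.[tau j] *: Defs.lagrange tau j.
Proof.
move=> sp; apply/eqP; rewrite -subr_eq0; apply/eqP.
set q := _ - _; apply: contraTeq isT => qn0.
have : (size (map tau (enum 'I_k)) < size q)%N.
  apply: max_poly_roots => //.
    apply/allP => x /mapP [i _ ->]; rewrite /root /q hornerD hornerN horner_sum.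
    rewrite (bigD1 i) //= big1 ?hornerZ ?lagrange_at ?eqxx ?mulr1 ?addr0 ?subrr //.
    by move=> j ji; rewrite hornerZ lagrange_at eq_sym (negbTE ji) mulr0.
  by rewrite map_inj_uniq ?enum_uniq.
rewrite size_map size_enum_ord ltnNge => /negP; case.
apply: leq_trans (size_polyD _ _) _; rewrite size_polyN geq_max sp /=.
apply: leq_trans (size_sum _ _ _) _.
apply/bigmax_leqP => j _; exact: leq_trans (size_scale_leq _ _) (size_lagrange _).
Qed.

End H.

Theorem theorem4p2 (R : rcfType) (k s : nat) (tau : 'I_k -> R)
  (hs : (1 <= s)%N) (hsk : (s <= k)%N)
  (htau_inj : injective tau)
  (htau01 : forall i, 0 <= tau i <= 1)
  (hexact : quad_exact tau (2 * s - 1)) :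
  colloc_A tau *m Pmat s tau *m (Pmat s tau)^T *m Omega tau
  = Imat s tau *m (Pmat s tau)^T *m Omega tau.
Proof.
suff -> : colloc_A tau *m Pmat s tau = Imat s tau by [].
apply/matrixP => i m; rewrite !mxE.
have hsz : (size (Pj R m.+1) <= k)%N.
  apply: leq_trans (size_Pj _ _) _; apply: leq_trans hsk; exact: ltn_ord.
rewrite [in RHS](@interp R k tau htau_inj _ hsz).
rewrite pint_sum; apply: eq_bigr => j _; rewrite !mxE mulrC //.
Qed.
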